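(* Let $\lambda>0$ not be a fusion value, let $C_1,\dots,C_K$ be the clusters of the minimizer $\mathbf x^*$ of (P), and let $\boldsymbol\delta^a$ be a point in the relative interior of the set of $\boldsymbol\delta$-components of optimal solutions of (D-SOCP). Define $r:=\min\{\lambda-\|\boldsymbol\delta^a_{ll'}\|: l<l',\ l,l'\in C_k\text{ for some }k\}$ (over pairs in a common cluster). Then $r>0$. Moreover, if $\boldsymbol\delta$ satisfies $\|\boldsymbol\delta_{ij}-\boldsymbol\delta^a_{ij}\|\le p'\mu$ for all $i<j$, then $\|\boldsymbol\delta_{ij}\|\le\lambda-r+p'\mu$ for all $i<j$ in a common cluster.
   Context: Data: $n\ge2$, $d\ge1$, $\mathbf a_i\in\mathbb R^d$, $r_i>0$, $\lambda>0$. (P): minimize $\frac12\sum_ir_i\|\mathbf x_i-\mathbf a_i\|^2+\lambda\sum_{i<j}r_ir_j\|\mathbf x_i-\mathbf x_j\|$, minimizer $\mathbf x^*(\lambda)$, clusters = classes of $i\sim j\iff\mathbf x_i^*=\mathbf x_j^*$. $\lambda_0>0$ is a fusion value if some $i\ne j$ have $\mathbf x_i^*(\lambda_0)=\mathbf x_j^*(\lambda_0)$ but $\mathbf x_i^*(\lambda)\ne\mathbf x_j^*(\lambda)$ for all $\lambda<\lambda_0$. Antisymmetric notation $\mathbf v_{\langle ij\rangle}=\mathbf v_{ij}$ ($i<j$), $-\mathbf v_{ji}$ ($i>j$), $\mathbf 0$ ($i=j$). (D-SOCP): maximize $\sum_ir_i\mathbf a_i^T\boldsymbol\beta_i+\sum_ir_i\gamma_i$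 over $\boldsymbol\delta_{ij},\boldsymbol\beta_i\in\mathbb R^d$, $\gamma_i\in\mathbb R$ s.t. $\sum_jr_j\boldsymbol\delta_{\langle ij\rangle}+\boldsymbol\beta_i=\mathbf 0$, $\|\boldsymbol\delta_{ij}\|\le\lambda$, $1-\gamma_i\ge\|(\boldsymbol\beta_i,\gamma_i)\|$. $p'\ge0$, $\mu\ge0$ are real numbers. *)

(* Defs.v *)
From HB Require Import structures.
From mathcomp Require Import all_boot all_order all_algebra.
From mathcomp Require Import reals.
Set Implicit Arguments. Unset Strict Implicit. Unset Printing Implicit Defensive.
Import Order.TTheory GRing.Theory Num.Theory.
Local Open Scope ring_scope.

Section Defs.
Variables (R : realType) (n d : nat).

Definition enorm (v : 'rV[R]_d) : R := Num.sqrt (\sum_(k < d) v 0 k ^+ 2).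

Definition edot (u v : 'rV[R]_d) : R := \sum_(k < d) u 0 k * v 0 k.

Definition objP (a : 'I_n -> 'rV[R]_d) (w : 'I_n -> R) (lam : R)
  (x : 'I_n -> 'rV[R]_d) : R :=
  2^-1 * \sum_(i < n) w i * enorm (x i - a i) ^+ 2
  + lam * \sum_(i < n) \sum_(j < n | (i < j)%N) w i * w j * enorm (x i - x j).

Definition is_minimizerP a w lam (x : 'I_n -> 'rV[R]_d) : Prop :=
  forall y, objP a w lam x <= objP a w lam y.

Definition fusion_value a w (lam0 : R) : Prop :=
  0 < lam0 /\
  exists i j : 'I_n, i != j /\
    (forall x, is_minimizerP a w lam0 x -> x i = x j) /\
    (forall lam, 0 < lam -> lam < lam0 ->
       forall x, is_minimizerP a w lam x -> x i <> x j).

(* dual variables: delta_{ij} meaningful for i < j only *)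
Definition dvar := 'I_n -> 'I_n -> 'rV[R]_d.

Definition dang (delta : dvar) (i j : 'I_n) : 'rV[R]_d :=
  if (i < j)%N then delta i j else if (j < i)%N then - delta j i else 0.

Definition objD a w (beta : 'I_n -> 'rV[R]_d) (gamma : 'I_n -> R) : R :=
  \sum_(i < n) w i * edot (a i) (beta i) + \sum_(i < n) w i * gamma i.

Definition feasD w (lam : R) (delta : dvar) (beta : 'I_n -> 'rV[R]_d)
  (gamma : 'I_n -> R) : Prop :=
  (forall i : 'I_n, \sum_(j < n) w j *: dang delta i j + beta i = 0) /\
  (forall i j : 'I_n, (i < j)%N -> enorm (delta i j) <= lam) /\
  (forall i : 'I_n,
     Num.sqrt (enorm (beta i) ^+ 2 + gamma i ^+ 2) <= 1 - gamma i).

Definition optD a w lam delta beta gamma : Prop :=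
  feasD w lam delta beta gamma /\
  forall delta' beta' gamma', feasD w lam delta' beta' gamma' ->
    objD a w beta' gamma' <= objD a w beta gamma.

(* the delta-component (coordinates delta_{ij}, i < j) of a dual point;
   coordinates with i >= j are normalised to 0 *)
Definition dproj (delta : dvar) : dvar :=
  fun i j => if (i < j)%N then delta i j else 0.

Definition opt_delta_set a w lam : dvar -> Prop :=
  fun z => exists delta beta gamma, optD a w lam delta beta gamma /\ z = dproj delta.

Definition aff_hull (S : dvar -> Prop) : dvar -> Prop :=
  fun y => exists (m : nat) (c : 'I_m -> R) (s : 'I_m -> dvar),
    (forall k, S (s k)) /\ \sum_(k < m) c k = 1 /\
    forall i j, y i j = \sum_(k < m) c k *: s k i j.

Definition rel_interior (S : dvar -> Prop) : dvar -> Prop :=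
  fun z => S z /\ exists eps : R, 0 < eps /\
    forall y, aff_hull S y ->
      (forall i j, enorm (y i j - z i j) < eps) -> S y.

End Defs.

(* Main.v *)
Require Import Defs.
From HB Require Import structures.
From mathcomp Require Import all_boot all_order all_algebra.
From mathcomp Require Import reals.
From mathcomp Require Import all_classical all_reals.
From mathcomp Require Import topology normedtype derive.
From mathcomp Require Import ring lra.
From Stdlib Require Import FunctionalExtensionality Classical.
Import Order.TTheory GRing.Theory Num.Theory.
Import numFieldNormedType.Exports.
Local Open Scope ring_scope.


Module A1.
Set Implicit Arguments. Unset Strict Implicit. Unset Printing Implicit Defensive.

Section Vec.
Variables (R : realType) (d : nat).
Implicit Types (u v x : 'rV[R]_d).

Lemma edotC u v : edot u v = edot v u.
Proof. by apply: eq_bigr => k _; rewrite mulrC. Qed.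
Lemma edotDl u v x : edot (u + v) x = edot u x + edot v x.
Proof. by rewrite /edot -big_split; apply: eq_bigr => k _; rewrite !mxE mulrDl. Qed.
Lemma edotZl c u v : edot (c *: u) v = c * edot u v.
Proof. by rewrite /edot mulr_sumr; apply: eq_bigr => k _; rewrite !mxE mulrA. Qed.
Lemma edotNl u v : edot (- u) v = - edot u v.
Proof. by rewrite -scaleN1r edotZl mulN1r. Qed.
Lemma edotBl u v x : edot (u - v) x = edot u x - edot v x.
Proof. by rewrite edotDl edotNl. Qed.
Lemma edot0l v : edot 0 v = 0.
Proof. by rewrite /edot big1 // => k _; rewrite mxE mul0r. Qed.
Lemma edotDr u v x : edot x (u + v) = edot x u + edot x v.
Proof. by rewrite edotC edotDl !(edotC x). Qed.
Lemma edotZr c u v : edot v (c *: u) = c * edot v u.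
Proof. by rewrite edotC edotZl edotC. Qed.
Lemma edotNr u v : edot v (- u) = - edot v u.
Proof. by rewrite edotC edotNl edotC. Qed.
Lemma edotBr u v x : edot x (u - v) = edot x u - edot x v.
Proof. by rewrite edotDr edotNr. Qed.
Lemma edot0r v : edot v 0 = 0.
Proof. by rewrite edotC edot0l. Qed.
Lemma edot_suml I (r : seq I) (P : pred I) (F : I -> 'rV[R]_d) v :
  edot (\sum_(i <- r | P i) F i) v = \sum_(i <- r | P i) edot (F i) v.
Proof. by apply: (big_morph (fun u => edot u v)) => [u x|]; rewrite ?edotDl ?edot0l. Qed.
Lemma edot_sumr I (r : seq I) (P : pred I) (F : I -> 'rV[R]_d) v :
  edot v (\sum_(i <- r | P i) F i) = \sum_(i <- r | P i) edot v (F i).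
Proof. by rewrite edotC edot_suml; apply: eq_bigr => i _; rewrite edotC. Qed.

Lemma nsq_ge0 v : 0 <= edot v v.
Proof. by apply: sumr_ge0 => k _; rewrite -expr2 sqr_ge0. Qed.
Lemma nsq_eq0 v : edot v v = 0 -> v = 0.
Proof.
move=> /eqP; rewrite psumr_eq0 => [/allP H|k _]; last by rewrite -expr2 sqr_ge0.
apply/rowP => k; rewrite mxE; have := H k (mem_index_enum k).
by rewrite /= -expr2 sqrf_eq0 => /eqP.
Qed.
Lemma enormE v : enorm v = Num.sqrt (edot v v).
Proof. by rewrite /enorm /edot; congr Num.sqrt; apply: eq_bigr => k _; rewrite expr2. Qed.
Lemma enorm_ge0 v : 0 <= enorm v.
Proof. exact: sqrtr_ge0. Qed.
Lemma enorm_sq v : enorm v ^+ 2 = edot v v.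
Proof. by rewrite enormE sqr_sqrtr // nsq_ge0. Qed.
Lemma enorm0 : enorm (0 : 'rV[R]_d) = 0.
Proof. by rewrite enormE edot0l sqrtr0. Qed.
Lemma enorm_eq0 v : enorm v = 0 -> v = 0.
Proof. by move=> h; apply: nsq_eq0; rewrite -enorm_sq h expr0n. Qed.

Lemma CS2 u v : edot u v ^+ 2 <= edot u u * edot v v.
Proof.
have [v0|vn0] := eqVneq v 0.
  by rewrite v0 !edot0r expr0n mulr0.
set A := edot v v; set B := edot u v; set C := edot u u.
have Apos : 0 < A.
  rewrite lt_def nsq_ge0 andbT; apply/negP => /eqP/nsq_eq0 h; by rewrite h eqxx in vn0.
have h := nsq_ge0 (A *: u - B *: v).
rewrite !(edotBl, edotBr, edotZl, edotZr) -/A -/B -/C (edotC v u) -/B in h.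
have : 0 <= A * (A * C - B ^+ 2) by rewrite -[X in _ <= X]/(_) ; nra.
by rewrite pmulr_rge0 // subr_ge0 mulrC.
Qed.

Lemma CS u v : edot u v <= enorm u * enorm v.
Proof.
have [h|h] := lerP (edot u v) 0.
  by apply: le_trans h _; rewrite mulr_ge0 // enorm_ge0.
rewrite !enormE -sqrtrM ?nsq_ge0 //.
rewrite -(ger0_norm (ltW h)) -sqrtr_sqr; rewrite ler_sqrt ?mulr_ge0 ?nsq_ge0 //.
exact: CS2.
Qed.

Lemma CSN u v : - edot u v <= enorm u * enorm v.
Proof. by rewrite -edotNl; apply: le_trans (CS _ _) _; rewrite !enormE edotNl edotNr opprK. Qed.

Lemma enormN v : enorm (- v) = enorm v.
Proof. by rewrite !enormE edotNl edotNr opprK. Qed.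
Lemma enormZ c v : enorm (c *: v) = `|c| * enorm v.
Proof.
by rewrite !enormE edotZl edotZr mulrA -expr2 sqrtrM ?sqr_ge0 // sqrtr_sqr.
Qed.
Lemma enormD u v : enorm (u + v) <= enorm u + enorm v.
Proof.
have h0 : 0 <= enorm u + enorm v by rewrite addr_ge0 ?enorm_ge0.
rewrite -(ger0_norm h0) -sqrtr_sqr enormE ler_sqrt ?sqr_ge0 //.
rewrite !(edotDl, edotDr) sqrrD !enorm_sq (edotC v u).
have := CS u v; lra.
Qed.
Lemma enormB u v : enorm (u - v) = enorm (v - u).
Proof. by rewrite -enormN opprB. Qed.
Lemma enorm_sum I (r : seq I) (P : pred I) (F : I -> 'rV[R]_d) :
  enorm (\sum_(i <- r | P i) F i) <= \sum_(i <- r | P i) enorm (F i).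
Proof.
elim: r => [|x r IH]; first by rewrite !big_nil enorm0.
rewrite !big_cons; case: (P x) => //.
by apply: le_trans (enormD _ _) _; rewrite lerD2l.
Qed.
End Vec.

End A1.
Import A1.

Module A2.
Set Implicit Arguments. Unset Strict Implicit. Unset Printing Implicit Defensive.

Lemma pairsplit (V : zmodType) (n : nat) (h : 'I_n -> 'I_n -> V) :
  \sum_(i < n) \sum_(j < n) h i j = \sum_(i < n) \sum_(j < n | (i < j)%N) (h i j + h j i) + \sum_(i < n) h i i.
Proof.
have E1 : forall i, \sum_(j < n) h i j = \sum_(j < n | (i < j)%N) h i j
          + \sum_(j < n) (if (j < i)%N then h i j else 0) + h i i.
  move=> i.
  have -> : h i i = \sum_(j < n) (if j == i then h i j else 0).
    by rewrite -big_mkcond big_pred1_eq.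
  rewrite [\sum_(j < n | (i < j)%N) _]big_mkcond /= -!big_split /=; apply: eq_bigr => j _.
  rewrite eq_sym; case: (ltngtP i j) => [h1|h1|/val_inj ->]; rewrite ?eqxx ?addr0 ?add0r //.
  - have -> : (i == j) = false by apply/eqP => e; move: h1; rewrite e ltnn.
    by rewrite addr0.
  - have -> : (i == j) = false by apply/eqP => e; move: h1; rewrite e ltnn.
    by rewrite addr0.
rewrite (eq_bigr _ (fun i _ => E1 i)) !big_split /=; congr (_ + _).
rewrite [X in _ + X = _](exchange_big) /=.
rewrite -big_split; apply: eq_bigr => i _ /=.
by rewrite big_split /= [\sum_(j < n | (i < j)%N) h j i]big_mkcond.
Qed.

Section Main.
Variables (R : realType) (n d : nat) (a : 'I_n -> 'rV[R]_d) (w : 'I_n -> R).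
Hypothesis hw : forall i, 0 < w i.

Definition Sd (delta : dvar R n d) (i : 'I_n) := \sum_(j < n) w j *: dang delta i j.
Definition zd (delta : dvar R n d) (i : 'I_n) := a i + Sd delta i.
Definition Gd (delta : dvar R n d) := \sum_(i < n) w i *
   (- edot (a i) (Sd delta i) - 2^-1 * edot (Sd delta i) (Sd delta i)).
Definition feas (t : R) (delta : dvar R n d) :=
  forall i j : 'I_n, (i < j)%N -> enorm (delta i j) <= t.
Definition dopt t delta := feas t delta /\ forall delta', feas t delta' -> Gd delta' <= Gd delta.
Definition Pen (x : 'I_n -> 'rV[R]_d) :=
  \sum_(i < n) \sum_(j < n | (i < j)%N) w i * w j * enorm (x i - x j).
Definition gapt t (delta : dvar R n d) (y : 'I_n -> 'rV[R]_d) :=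
  \sum_(i < n) \sum_(j < n | (i < j)%N)
     w i * w j * (t * enorm (y i - y j) + edot (y i - y j) (delta i j)).

Lemma dang_ii (delta : dvar R n d) (i : 'I_n) : dang delta i i = 0.
Proof. by rewrite /dang ltnn. Qed.
Lemma dang_anti (delta : dvar R n d) (i j : 'I_n) : dang delta j i = - dang delta i j.
Proof.
rewrite /dang; case: (ltngtP i j) => [h|h|e]; by rewrite ?opprK ?oppr0.
Qed.
Lemma dang_lt (delta : dvar R n d) (i j : 'I_n) : (i < j)%N -> dang delta i j = delta i j.
Proof. by rewrite /dang => ->. Qed.

Lemma L1 (delta : dvar R n d) (y : 'I_n -> 'rV[R]_d) :
  \sum_(i < n) w i * edot (y i) (Sd delta i) =
  \sum_(i < n) \sum_(j < n | (i < j)%N) w i * w j * edot (y i - y j) (delta i j).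
Proof.
have -> : \sum_(i < n) w i * edot (y i) (Sd delta i) =
    \sum_(i < n) \sum_(j < n) w i * w j * edot (y i) (dang delta i j).
  apply: eq_bigr => i _; rewrite /Sd edot_sumr mulr_sumr; apply: eq_bigr => j _.
  by rewrite edotZr mulrA.
rewrite pairsplit [X in _ + X]big1 ?addr0; last first.
  by move=> i _; rewrite dang_ii edot0r mulr0.
apply: eq_bigr => i _; apply: eq_bigr => j hij.
rewrite (dang_anti _ i j) dang_lt // edotNr edotBl; ring.
Qed.

Lemma gap_identity t delta y :
  objP a w t y = 2^-1 * \sum_(i < n) w i * edot (y i - zd delta i) (y i - zd delta i)
     + Gd delta + gapt t delta y.
Proof.
rewrite /objP /gapt /Gd.
have -> : \sum_(i < n) \sum_(j < n | (i < j)%N)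
     w i * w j * (t * enorm (y i - y j) + edot (y i - y j) (delta i j))
   = t * Pen y + \sum_(i < n) w i * edot (y i) (Sd delta i).
  rewrite L1 /Pen mulr_sumr -big_split; apply: eq_bigr => i _.
  rewrite mulr_sumr -big_split; apply: eq_bigr => j _ /=; ring.
rewrite /Pen.
have -> : \sum_(i < n) w i * enorm (y i - a i) ^+ 2 =
   \sum_(i < n) w i * edot (y i - zd delta i) (y i - zd delta i) +
   2%:R * \sum_(i < n) w i * edot (y i) (Sd delta i) +
   \sum_(i < n) w i * (- 2%:R * edot (a i) (Sd delta i) - edot (Sd delta i) (Sd delta i)).
  rewrite mulr_sumr -!big_split; apply: eq_bigr => i _ /=.
  rewrite enorm_sq /zd.
  have -> : y i - (a i + Sd delta i) = (y i - a i) - Sd delta i by rewrite opprD addrA.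
  rewrite !(edotBl, edotBr, edotDl, edotDr, edotNl, edotNr) (edotC (Sd delta i) (y i)) (edotC (Sd delta i) (a i)) (edotC (a i) (y i)).
  ring.
rewrite !mulrDr mulrA mulVf ?pnatr_eq0 // mul1r.
have -> : 2^-1 * \sum_(i < n) w i * (- 2%:R * edot (a i) (Sd delta i) - edot (Sd delta i) (Sd delta i))
  = \sum_(i < n) w i * (- edot (a i) (Sd delta i) - 2^-1 * edot (Sd delta i) (Sd delta i)).
  rewrite mulr_sumr; apply: eq_bigr => i _.
  have h2 : (2%:R : R) != 0 by rewrite pnatr_eq0.
  by field.
ring.
Qed.

End Main.

End A2.
Import A2.

Module A3.
Set Implicit Arguments. Unset Strict Implicit. Unset Printing Implicit Defensive.

Lemma quad_le0 (R : realFieldType) (L Q : R) : 0 <= Q ->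
  (forall s, 0 < s -> s <= 1 -> s * L <= s ^+ 2 * Q) -> L <= 0.
Proof.
move=> Q0 H; rewrite leNgt; apply/negP => L0.
have den : 0 < L + Q + 1 by lra.
set s := L / (L + Q + 1).
have s0 : 0 < s by rewrite divr_gt0.
have s1 : s <= 1 by rewrite ler_pdivrMr // mul1r; lra.
have := H s s0 s1; rewrite expr2 -mulrA ler_pM2l //.
have : s * Q < L.
  rewrite /s mulrAC ltr_pdivrMr //. nra.
lra.
Qed.

Section Main3.
Variables (R : realType) (n d : nat) (a : 'I_n -> 'rV[R]_d) (w : 'I_n -> R).
Hypothesis hw : forall i, 0 < w i.

Local Notation Sd := (Sd w).
Local Notation zd := (zd a w).
Local Notation Gd := (Gd a w).
Local Notation feas := (@feas R n d).
Local Notation dopt := (dopt a w).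
Local Notation gapt := (gapt w).

Lemma gap_ge0 t delta y : feas t delta -> 0 <= gapt t delta y.
Proof.
move=> hf; apply: sumr_ge0 => i _; apply: sumr_ge0 => j hij.
apply: mulr_ge0; first by apply: mulr_ge0; apply: ltW.
have := CSN (y i - y j) (delta i j).
have := hf i j hij.
have := enorm_ge0 (y i - y j).
nra.
Qed.

Lemma dang_lin (delta E : dvar R n d) (s : R) (i j : 'I_n) :
  dang (fun i j => delta i j + s *: E i j) i j = dang delta i j + s *: dang E i j.
Proof.
by rewrite /dang; case: ifP => _; [|case: ifP => _]; rewrite ?scaler0 ?addr0 // opprD scalerN.
Qed.

Lemma Sd_lin (delta E : dvar R n d) (s : R) (i : 'I_n) :
  Sd (fun i j => delta i j + s *: E i j) i = Sd delta i + s *: Sd E i.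
Proof.
rewrite /A2.Sd scaler_sumr -big_split; apply: eq_bigr => j _.
by rewrite dang_lin scalerDr !scalerA mulrC.
Qed.

Lemma Gd_lin (delta E : dvar R n d) (s : R) :
  Gd (fun i j => delta i j + s *: E i j) = Gd delta
    - s * \sum_i w i * edot (zd delta i) (Sd E i)
    - s ^+ 2 * (2^-1 * \sum_i w i * edot (Sd E i) (Sd E i)).
Proof.
rewrite /A2.Gd !mulr_sumr -!sumrN -!big_split; apply: eq_bigr => i _ /=.
rewrite Sd_lin /A2.zd !(edotDl, edotDr, edotZl, edotZr) (edotC (Sd E i) (Sd delta i)).
by field.
Qed.

Lemma single_sum (p q : 'I_n) (c : R) : (p < q)%N ->
  \sum_(i < n) \sum_(j < n | (i < j)%N) (if (i == p) && (j == q) then c else 0) = c.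
Proof.
move=> pq; rewrite (bigD1 p) //= [X in _ + X]big1 ?addr0; last first.
  move=> i ip; rewrite big1 // => j _; move: ip; by case: (i == p).
rewrite (bigD1 q) //= [X in _ + X]big1 ?addr0; last first.
  by move=> j /andP[_ /negbTE ->]; rewrite andbF.
by rewrite !eqxx.
Qed.

Lemma cs_dopt t delta : dopt t delta -> forall p q : 'I_n, (p < q)%N ->
  t * enorm (zd delta p - zd delta q) + edot (zd delta p - zd delta q) (delta p q) <= 0.
Proof.
move=> [hf hopt] p q pq.
set D := zd delta p - zd delta q.
have t0 : 0 <= t by apply: le_trans (hf p q pq); apply: enorm_ge0.
have [D0|Dn0] := eqVneq D 0.
  by rewrite D0 enorm0 mulr0 edot0l addr0.
have nD0 : 0 < enorm D.
  rewrite lt_def enorm_ge0 andbT; apply/eqP => /enorm_eq0 h; by rewrite h eqxx in Dn0.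
set u := (enorm D)^-1 *: D.
have nu : enorm u = 1 by rewrite enormZ ger0_norm ?invr_ge0 ?enorm_ge0 // mulVf // gt_eqF.
have Du : edot D u = enorm D.
  rewrite edotZr -enorm_sq expr2 mulrA mulVf ?mul1r // gt_eqF //.
set e := - (t *: u) - delta p q.
set E : dvar R n d := fun i j => if (i == p) && (j == q) then e else 0.
have key : forall s, 0 < s -> s <= 1 ->
    s * (- (w p * w q * edot D e)) <= s ^+ 2 * (2^-1 * \sum_i w i * edot (Sd E i) (Sd E i)).
  move=> s s0 s1.
  have hf' : feas t (fun i j => delta i j + s *: E i j).
    move=> i j ij; rewrite /E; case: ifP => [/andP[/eqP -> /eqP ->]|_].
      rewrite /e.
      have -> : delta p q + s *: (- (t *: u) - delta p q) = (1 - s) *: delta p q + (- (s * t)) *: u.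
        by apply/rowP => k; rewrite !mxE; ring.
      apply: le_trans (enormD _ _) _; rewrite (enormZ (1 - s)) (enormZ (- (s * t))) nu mulr1.
      rewrite ger0_norm ?subr_ge0 // normrN ger0_norm ?mulr_ge0 ?(ltW s0) //.
      have := hf p q pq; have : 0 <= 1 - s by lra. nra.
    by rewrite scaler0 addr0; apply: hf.
  have := hopt _ hf'; rewrite Gd_lin.
  have -> : \sum_i w i * edot (zd delta i) (Sd E i) = w p * w q * edot D e.
    rewrite (L1 _ _ (zd delta)) -(@single_sum p q (w p * w q * edot D e) pq).
    apply: eq_bigr => i _; apply: eq_bigr => j _; rewrite /E.
    case: ifP => [/andP[/eqP -> /eqP ->]//|_]; by rewrite edot0r mulr0.
  lra.
have := quad_le0 _ key; rewrite mulr_ge0 ?invr_ge0 ?ler0n //; last first.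
  by apply: sumr_ge0 => i _; rewrite mulr_ge0 ?nsq_ge0 ?(ltW (hw i)).
move=> /(_ isT); rewrite oppr_le0 pmulr_rge0 ?mulr_gt0 //.
rewrite /e edotBr edotNr edotZr Du -/D.
lra.
Qed.

Lemma gap_z_le0 t delta : dopt t delta -> gapt t delta (zd delta) <= 0.
Proof.
move=> ho; apply: sumr_le0 => i _; apply: sumr_le0 => j ij.
by rewrite pmulr_rle0 ?mulr_gt0 //; apply: cs_dopt.
Qed.

Lemma dopt_bound t delta : dopt t delta -> forall y,
  objP a w t (zd delta) + 2^-1 * \sum_i w i * edot (y i - zd delta i) (y i - zd delta i)
  <= objP a w t y.
Proof.
move=> ho y; rewrite (gap_identity _ _ t delta y) (gap_identity _ _ t delta (zd delta)).
rewrite big1 ?mulr0 ?add0r; last by move=> i _; rewrite subrr edot0l mulr0.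
have := gap_z_le0 ho; have := gap_ge0 y (proj1 ho); lra.
Qed.

Lemma dopt_minimizer t delta : dopt t delta -> is_minimizerP a w t (zd delta).
Proof.
move=> ho y; apply: le_trans (dopt_bound ho y); rewrite lerDl mulr_ge0 ?invr_ge0 ?ler0n //.
by apply: sumr_ge0 => i _; rewrite mulr_ge0 ?nsq_ge0 ?(ltW (hw i)).
Qed.

Lemma dopt_unique t delta x : dopt t delta -> is_minimizerP a w t x -> x = zd delta.
Proof.
move=> ho hx; have := dopt_bound ho x; have := hx (zd delta).
set S := \sum_i _ => h1 h2.
have S0 : S <= 0 by lra.
have : S == 0.
  rewrite eq_le S0 /=; apply: sumr_ge0 => i _; rewrite mulr_ge0 ?nsq_ge0 ?(ltW (hw i)) //.
rewrite psumr_eq0 => [/allP H|i _]; last by rewrite mulr_ge0 ?nsq_ge0 ?(ltW (hw i)).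
apply: functional_extensionality => i; apply/eqP; rewrite -subr_eq0; apply/eqP; apply: nsq_eq0.
have := H i (mem_index_enum i); rewrite /= mulf_eq0 gt_eqF //= => /eqP //.
Qed.

End Main3.

End A3.
Import A3.

Module A4.
Set Implicit Arguments. Unset Strict Implicit. Unset Printing Implicit Defensive.

Lemma eq_case (R : realType) d (D v : 'rV[R]_d) t : D != 0 -> enorm v <= t ->
  t * enorm D + edot D v <= 0 -> v = (- t / enorm D) *: D.
Proof.
move=> Dn0 vt h.
have t0 : 0 <= t by apply: le_trans vt; apply: enorm_ge0.
have nD0 : 0 < enorm D.
  rewrite lt_def enorm_ge0 andbT; apply/eqP => /enorm_eq0 e; by rewrite e eqxx in Dn0.
set u := (enorm D)^-1 *: D.
have uu : edot u u = 1.
  by rewrite -enorm_sq enormZ ger0_norm ?invr_ge0 ?enorm_ge0 // mulVf ?gt_eqF // expr1n.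
have uv : edot u v <= - t.
  rewrite /u edotZl; rewrite -(ler_pM2l nD0) mulrA mulfV ?gt_eqF // mul1r; lra.
have ue : u = (enorm D)^-1 *: D by []. clearbody u.
have vv : edot v v <= t ^+ 2.
  by rewrite -enorm_sq; apply: lerXn2r; rewrite ?nnegrE ?enorm_ge0.
have : edot (v + t *: u) (v + t *: u) <= 0.
  rewrite !(edotDl, edotDr, edotZl, edotZr) uu (edotC v u); nra.
move=> h2; have : edot (v + t *: u) (v + t *: u) = 0.
  by apply/eqP; rewrite eq_le h2 nsq_ge0.
move/nsq_eq0 => /eqP; rewrite addr_eq0 => /eqP ->.
by rewrite ue scalerA mulNr scaleNr.
Qed.

Lemma anti_sum0 (R : realType) (V : lmodType R) (n : nat) (P : pred 'I_n)
  (g : 'I_n -> 'I_n -> V) : (forall i j, g j i = - g i j) ->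
  \sum_(i < n | P i) \sum_(j < n | P j) g i j = 0.
Proof.
move=> ga; set X := \sum_(i < n | P i) _.
have : X = - X.
  rewrite {1}/X exchange_big /= /X -sumrN; apply: eq_bigr => i _.
  rewrite -sumrN; apply: eq_bigr => j _; exact: ga.
move/eqP; rewrite -addr_eq0 -mulr2n -scaler_nat scaler_eq0 pnatr_eq0 /= => /eqP //.
Qed.

Section Main4.
Variables (R : realType) (n d : nat) (a : 'I_n -> 'rV[R]_d) (w : 'I_n -> R).
Hypothesis hw : forall i, 0 < w i.

Local Notation Sd := (Sd w).
Local Notation zd := (zd a w).
Local Notation dopt := (dopt a w).

Lemma dang_eq t delta : dopt t delta -> forall i j : 'I_n, zd delta i != zd delta j ->
  dang delta i j = (- t / enorm (zd delta i - zd delta j)) *: (zd delta i - zd delta j).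
Proof.
move=> ho i j zij.
have gen : forall p q : 'I_n, (p < q)%N -> zd delta p != zd delta q ->
    delta p q = (- t / enorm (zd delta p - zd delta q)) *: (zd delta p - zd delta q).
  move=> p q pq zpq; apply: eq_case; first by rewrite subr_eq0.
    exact: (proj1 ho).
  exact: cs_dopt.
case: (ltngtP i j) => [ij|ji|e].
- by rewrite dang_lt // gen.
- rewrite -(opprK (dang _ i j)) -dang_anti dang_lt // gen 1?eq_sym //.
  by rewrite enormB -scalerN opprB.
- by move: zij; rewrite (val_inj e) eqxx.
Qed.

Lemma W_form t delta (l : 'I_n) : dopt t delta -> exists c, forall i,
  zd delta i = zd delta l ->
  a i + \sum_(j < n | zd delta j == zd delta l) w j *: dang delta i j = c.
Proof.
move=> ho.
exists (zd delta l - \sum_(j < n | zd delta j != zd delta l) w j *: dang delta l j).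
move=> i zil.
have E : zd delta i = a i + \sum_(j < n | zd delta j == zd delta l) w j *: dang delta i j
   + \sum_(j < n | zd delta j != zd delta l) w j *: dang delta i j.
  by rewrite /A2.zd /A2.Sd (bigID (fun j => zd delta j == zd delta l)) /= addrA.
have F : \sum_(j < n | zd delta j != zd delta l) w j *: dang delta i j
   = \sum_(j < n | zd delta j != zd delta l) w j *: dang delta l j.
  apply: eq_bigr => j hj.
  have h1 : zd delta i != zd delta j by rewrite zil eq_sym.
  have h2 : zd delta l != zd delta j by rewrite eq_sym.
  by rewrite (dang_eq ho h1) (dang_eq ho h2) zil.
apply/eqP; rewrite eq_sym subr_eq -F -E zil //.
Qed.

Lemma mean_lemma (P : pred 'I_n) (D : 'I_n -> 'I_n -> 'rV[R]_d) c :
  (forall i j, D j i = - D i j) ->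
  (forall i, P i -> a i + \sum_(j < n | P j) w j *: D i j = c) ->
  (\sum_(i < n | P i) w i) *: c = \sum_(i < n | P i) w i *: a i.
Proof.
move=> Da hc; rewrite scaler_suml.
rewrite (eq_bigr (fun i => w i *: a i + w i *: \sum_(j < n | P j) w j *: D i j)); last first.
  by move=> i Pi; rewrite -scalerDr hc.
rewrite big_split /= [X in _ + X](_ : _ = 0) ?addr0 //.
rewrite -[RHS](@anti_sum0 _ _ _ P (fun i j => (w i * w j) *: D i j)); last first.
  by move=> i j; rewrite Da scalerN mulrC.
apply: eq_bigr => i _; rewrite scaler_sumr; apply: eq_bigr => j _.
by rewrite scalerA.
Qed.

End Main4.

End A4.
Import A4.

Module A5.
Set Implicit Arguments. Unset Strict Implicit. Unset Printing Implicit Defensive.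

Section Main5.
Variables (R : realType) (n d : nat) (a : 'I_n -> 'rV[R]_d) (w : 'I_n -> R).
Hypothesis hw : forall i, 0 < w i.

Definition Ff (z : 'I_n -> 'rV[R]_d) :=
  \sum_(i < n) \sum_(j < n) w i * w j * enorm (z i - z j).

Lemma halfsum z : Pen w z = 2^-1 * Ff z.
Proof.
rewrite /Ff pairsplit [X in _ * (_ + X)]big1 ?addr0; last by move=> i _; rewrite subrr enorm0 mulr0.
rewrite /Pen mulr_sumr; apply: eq_bigr => i _; rewrite mulr_sumr; apply: eq_bigr => j _.
rewrite enormB (mulrC (w j)).
have h2 : (2%:R : R) != 0 by rewrite pnatr_eq0.
by field.
Qed.

Lemma Fbound (P : pred 'I_n) (x : 'I_n -> 'rV[R]_d) (m : 'rV[R]_d) :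
  (forall u, (\sum_(j < n | P j) w j) * enorm (m - u)
             <= \sum_(j < n | P j) w j * enorm (x j - u)) ->
  Ff (fun i => if P i then m else x i)
   + \sum_(i < n | P i) \sum_(j < n | P j) w i * w j * enorm (x i - x j) <= Ff x.
Proof.
move=> H2; set RP := \sum_(j < n | P j) w j.
rewrite /Ff (bigID P) [X in _ <= X](bigID P) /=.
have Ea : \sum_(i < n | ~~ P i) \sum_(j < n) w i * w j *
      enorm ((if P i then m else x i) - (if P j then m else x j))
   <= \sum_(i < n | ~~ P i) \sum_(j < n) w i * w j * enorm (x i - x j).
  apply: ler_sum => i /negbTE Pi; rewrite Pi.
  rewrite (bigID P) [X in _ <= X](bigID P) /=.
  rewrite [X in _ + X <= _](eq_bigr (fun j => w i * w j * enorm (x i - x j))); last by move=> j /negbTE ->.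
  rewrite lerD2r.
  rewrite (eq_bigr (fun j => w i * (w j * enorm (m - x i)))); last first.
    by move=> j ->; rewrite enormB mulrA.
  rewrite -mulr_sumr -mulr_suml -/RP.
  rewrite (eq_bigr (fun j => w i * (w j * enorm (x j - x i)))); last first.
    by move=> j _; rewrite enormB mulrA.
  by rewrite -mulr_sumr ler_wpM2l ?(ltW (hw i)) // H2.
have Eb : \sum_(i < n | P i) \sum_(j < n) w i * w j *
      enorm ((if P i then m else x i) - (if P j then m else x j))
   <= \sum_(i < n | P i) \sum_(j < n | ~~ P j) w i * w j * enorm (x i - x j).
  rewrite (eq_bigr (fun i => \sum_(j < n | ~~ P j) w i * w j * enorm (m - x j))); last first.
    move=> i Pi; rewrite Pi (bigID P) /= big1 ?add0r; last first.
      by move=> j ->; rewrite subrr enorm0 mulr0.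
    by apply: eq_bigr => j /negbTE ->.
  rewrite exchange_big [X in _ <= X]exchange_big /=; apply: ler_sum => j _.
  rewrite (eq_bigr (fun i => w j * (w i * enorm (m - x j)))); last first.
    by move=> i _; rewrite mulrA (mulrC (w j)).
  rewrite -mulr_sumr -mulr_suml -/RP.
  rewrite [X in _ <= X](eq_bigr (fun i => w j * (w i * enorm (x i - x j)))); last first.
    by move=> i _; rewrite mulrA (mulrC (w j)).
  by rewrite -mulr_sumr ler_wpM2l ?(ltW (hw j)) // H2.
have Ec : \sum_(i < n | P i) \sum_(j < n) w i * w j * enorm (x i - x j) =
   \sum_(i < n | P i) \sum_(j < n | P j) w i * w j * enorm (x i - x j) +
   \sum_(i < n | P i) \sum_(j < n | ~~ P j) w i * w j * enorm (x i - x j).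
  by rewrite -big_split; apply: eq_bigr => i _; rewrite (bigID P).
rewrite Ec; lra.
Qed.

End Main5.

End A5.
Import A5.

Module A6.
Set Implicit Arguments. Unset Strict Implicit. Unset Printing Implicit Defensive.

Lemma nsqD (R : realType) d (p q : 'rV[R]_d) :
  edot (p + q) (p + q) = edot p p + 2%:R * edot p q + edot q q.
Proof. by rewrite edotDl !edotDr (edotC q p); ring. Qed.

Section Main6.
Variables (R : realType) (n d : nat) (a : 'I_n -> 'rV[R]_d) (w : 'I_n -> R).
Hypothesis hw : forall i, 0 < w i.

Lemma fact2 t1 t2 (P : pred 'I_n) (l : 'I_n) (D : 'I_n -> 'I_n -> 'rV[R]_d) c x :
  P l -> t1 <= t2 -> (forall i j, D j i = - D i j) ->
  (forall i j, P i -> P j -> enorm (D i j) <= t1) ->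
  (forall i, P i -> a i + \sum_(j < n | P j) w j *: D i j = c) ->
  is_minimizerP a w t2 x -> forall i, P i -> x i = x l.
Proof.
move=> Pl t12 Da Db Dc hx.
have t10 : 0 <= t1 by apply: le_trans (Db l l Pl Pl); apply: enorm_ge0.
set RP := \sum_(i < n | P i) w i.
have RP0 : 0 < RP.
  rewrite /RP (bigD1 l) //=; have := hw l.
  have : 0 <= \sum_(i < n | P i && (i != l)) w i by apply: sumr_ge0 => i _; apply: ltW.
  lra.
set m := RP^-1 *: \sum_(i < n | P i) w i *: x i.
have Sm : \sum_(i < n | P i) w i *: x i = RP *: m.
  by rewrite /m scalerA mulfV ?gt_eqF // scale1r.
have H1 : \sum_(i < n | P i) w i *: (x i - m) = 0.
  rewrite (eq_bigr (fun i => w i *: x i - w i *: m)); last by move=> i _; rewrite scalerBr.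
  by rewrite sumrB -scaler_suml Sm subrr.
have H2 : forall u, RP * enorm (m - u) <= \sum_(j < n | P j) w j * enorm (x j - u).
  move=> u.
  have -> : RP * enorm (m - u) = enorm (\sum_(j < n | P j) w j *: (x j - u)).
    rewrite (eq_bigr (fun j => w j *: x j - w j *: u)); last by move=> j _; rewrite scalerBr.
    by rewrite sumrB -scaler_suml Sm -/RP -scalerBr enormZ ger0_norm // ltW.
  apply: le_trans (enorm_sum _ _ _) _; apply: ler_sum => j _.
  by rewrite enormZ ger0_norm // ltW.
clearbody m.
have [y ey] : exists y : 'I_n -> 'rV[R]_d, forall i, y i = if P i then m else x i.
  by exists (fun i => if P i then m else x i).
have [v ev] : exists v : 'I_n -> 'rV[R]_d, forall i, v i = x i - m.
  by exists (fun i => x i - m).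
set B := \sum_(i < n | P i) \sum_(j < n | P j) w i * w j * enorm (x i - x j).
have B0 : 0 <= B.
  apply: sumr_ge0 => i _; apply: sumr_ge0 => j _.
  by rewrite mulr_ge0 ?enorm_ge0 // mulr_ge0 // ltW.
set K := \sum_(i < n | P i) \sum_(j < n | P j) w i * w j * edot (v i) (D i j).
have EQ : \sum_(i < n) w i * enorm (y i - a i) ^+ 2 =
   \sum_(i < n) w i * enorm (x i - a i) ^+ 2
   - \sum_(i < n | P i) w i * edot (v i) (v i)
   - 2%:R * \sum_(i < n | P i) w i * edot (v i) (m - a i).
  rewrite (bigID P) [in RHS](bigID P) /=.
  rewrite [X in _ + X = _](eq_bigr (fun i => w i * enorm (x i - a i) ^+ 2)); last first.
    by move=> i /negbTE; rewrite ey => ->.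
  have -> : \sum_(i < n | P i) w i * enorm (y i - a i) ^+ 2 =
     \sum_(i < n | P i) w i * enorm (x i - a i) ^+ 2
     - \sum_(i < n | P i) w i * edot (v i) (v i)
     - 2%:R * \sum_(i < n | P i) w i * edot (v i) (m - a i).
    rewrite mulr_sumr -!sumrB; apply: eq_bigr => i Pi.
    rewrite ey Pi !enorm_sq.
    have -> : x i - a i = v i + (m - a i) by rewrite ev addrA subrK.
    rewrite (nsqD (v i) (m - a i)); ring.
  ring.
have EK : \sum_(i < n | P i) w i * edot (v i) (m - a i) = K.
  have -> : \sum_(i < n | P i) w i * edot (v i) (m - a i) =
      \sum_(i < n | P i) w i * edot (v i) (m - c)
    + \sum_(i < n | P i) w i * edot (v i) (\sum_(j < n | P j) w j *: D i j).
    rewrite -big_split; apply: eq_bigr => i Pi /=.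
    rewrite -mulrDr -edotDr; congr (_ * edot _ _).
    by rewrite -(Dc i Pi) opprD addrA subrK.
  have -> : \sum_(i < n | P i) w i * edot (v i) (m - c) = 0.
    rewrite -[RHS](edot0l (m - c)) -H1 edot_suml; apply: eq_bigr => i _.
    by rewrite edotZl ev.
  rewrite add0r /K; apply: eq_bigr => i _; rewrite edot_sumr mulr_sumr.
  by apply: eq_bigr => j _; rewrite edotZr mulrA.
have E2K : 2%:R * K = \sum_(i < n | P i) \sum_(j < n | P j)
     w i * w j * edot (x i - x j) (D i j).
  have -> : \sum_(i < n | P i) \sum_(j < n | P j) w i * w j * edot (x i - x j) (D i j)
     = K - \sum_(i < n | P i) \sum_(j < n | P j) w i * w j * edot (v j) (D i j).
    rewrite /K -sumrB; apply: eq_bigr => i _; rewrite -sumrB; apply: eq_bigr => j _.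
    have -> : x i - x j = v i - v j by rewrite !ev opprB addrA subrK.
    by rewrite edotBl mulrBr.
  have -> : \sum_(i < n | P i) \sum_(j < n | P j) w i * w j * edot (v j) (D i j) = - K.
    rewrite exchange_big /K -sumrN; apply: eq_bigr => i _; rewrite -sumrN.
    by apply: eq_bigr => j _; rewrite Da edotNr (mulrC (w j)) mulrN.
  rewrite opprK; ring.
have KB : - (2%:R * K) <= t1 * B.
  rewrite E2K /B -sumrN mulr_sumr; apply: ler_sum => i Pi.
  rewrite -sumrN mulr_sumr; apply: ler_sum => j Pj.
  have W0 : 0 < w i * w j by rewrite mulr_gt0.
  rewrite -mulrN mulrCA ler_pM2l // mulrC.
  apply: le_trans (CSN _ _) _; rewrite ler_wpM2l ?enorm_ge0 //; exact: Db.
have yfun : y = (fun i => if P i then m else x i) by apply: functional_extensionality.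
have Fb := Fbound hw H2; rewrite -yfun -/B in Fb.
set S := \sum_(i < n | P i) w i * edot (v i) (v i).
have S0 : 0 <= S by apply: sumr_ge0 => i _; rewrite mulr_ge0 ?nsq_ge0 // ltW.
have t20 : 0 <= t2 by apply: le_trans t12.
have M1 : t2 * Ff w y <= t2 * Ff w x - t2 * B.
  by rewrite -mulrBr ler_wpM2l // lerBrDr.
have M2 : t1 * B <= t2 * B by rewrite ler_wpM2r.
have hxy := hx y.
rewrite /objP -/(Pen w x) -/(Pen w y) !halfsum EQ -/S EK in hxy.
have S00 : S <= 0 by lra.
have : S == 0 by rewrite eq_le S00 S0.
rewrite psumr_eq0 => [/allP H|i _]; last by rewrite mulr_ge0 ?nsq_ge0 // ltW.
have xm : forall i, P i -> x i = m.
  move=> i Pi; have := H i (mem_index_enum i); rewrite Pi /= mulf_eq0 gt_eqF //=.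
  by move/eqP/nsq_eq0; rewrite ev => /eqP; rewrite subr_eq0 => /eqP.
by move=> i Pi; rewrite !xm.
Qed.

End Main6.

End A6.
Import A6.

Module A7.
Set Implicit Arguments. Unset Strict Implicit. Unset Printing Implicit Defensive.

Section Cont.
Local Open Scope classical_set_scope.
Variables (R : realType) (N : nat).
Local Notation V := 'rV[R]_N.

Lemma cont_add (f g : V -> R) : continuous f -> continuous g ->
  continuous (fun x => f x + g x).
Proof. by move=> hf hg x; exact: (cvgD (hf x) (hg x)). Qed.
Lemma cont_mul (f g : V -> R) : continuous f -> continuous g ->
  continuous (fun x => f x * g x).
Proof. by move=> hf hg x; exact: (cvgM (hf x) (hg x)). Qed.
Lemma cont_cst (c : R) : continuous (fun _ : V => c).
Proof. exact: cst_continuous. Qed.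
Lemma cont_opp (f : V -> R) : continuous f -> continuous (fun x => - f x).
Proof. by move=> hf x; exact: (cvgN (hf x)). Qed.
Lemma cont_coord q : continuous (fun v : V => v 0 q).
Proof. exact: coord_continuous. Qed.
Lemma cont_sum (I : eqType) (r : seq I) (P : pred I) (F : I -> V -> R) :
  (forall i, continuous (F i)) -> continuous (fun x => \sum_(i <- r | P i) F i x).
Proof.
move=> hF; elim: r => [|i r IH].
  by under eq_fun do rewrite big_nil; apply: cont_cst.
under eq_fun do rewrite big_cons; case: (P i) => //.
exact: cont_add.
Qed.
End Cont.

Section Exist.
Local Open Scope classical_set_scope.
Variables (R : realType) (n d : nat) (a : 'I_n -> 'rV[R]_d) (w : 'I_n -> R).
Hypothesis hw : forall i, 0 < w i.

Definition idx (i j : 'I_n) (k : 'I_d) : 'I_(n * n * d) := mxvec_index (mxvec_index i j) k.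
Definition dec (V : 'rV[R]_(n * n * d)) : dvar R n d := fun i j => \row_k V 0 (idx i j k).
Definition enc (delta : dvar R n d) : 'rV[R]_(n * n * d) :=
  mxvec (\matrix_(p, k) (mxvec (\matrix_(i, j) delta i j 0 k)) 0 p).

Lemma dec_enc delta : dec (enc delta) = delta.
Proof.
apply: functional_extensionality => i; apply: functional_extensionality => j.
apply/rowP => k; rewrite /dec /enc /idx !mxE mxvecE mxE mxvecE mxE.
by [].
Qed.

Lemma cont_S i k : continuous (fun V => Sd w (dec V) i 0 k).
Proof.
have -> : (fun V => Sd w (dec V) i 0 k) =
    (fun V => \sum_(j < n) w j * dang (dec V) i j 0 k).
  apply: functional_extensionality => V; rewrite /A2.Sd summxE.
  by apply: eq_bigr => j _; rewrite mxE.
apply: cont_sum => j; apply: cont_mul; first exact: cont_cst.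
rewrite /dang; case: (i < j)%N.
  by rewrite /dec; under eq_fun do rewrite mxE; apply: cont_coord.
case: (j < i)%N.
  by rewrite /dec; under eq_fun do rewrite !mxE; apply: cont_opp; apply: cont_coord.
by under eq_fun do rewrite mxE; apply: cont_cst.
Qed.

Lemma cont_G : continuous (fun V => Gd a w (dec V)).
Proof.
rewrite /A2.Gd /edot.
apply: cont_sum => i; apply: cont_mul; first exact: cont_cst.
apply: cont_add; first by apply: cont_opp; apply: cont_sum => k;
  apply: cont_mul; [exact: cont_cst|exact: cont_S].
apply: cont_opp; apply: cont_mul; first exact: cont_cst.
by apply: cont_sum => k; apply: cont_mul; exact: cont_S.
Qed.

Lemma coord_le (v : 'rV[R]_d) k : `|v 0 k| <= enorm v.
Proof.
rewrite enormE -sqrtr_sqr ler_sqrt ?nsq_ge0 // /edot (bigD1 k) //= expr2 lerDl.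
by apply: sumr_ge0 => j _; rewrite -expr2 sqr_ge0.
Qed.

Lemma cont_nsq i j : continuous (fun V => edot (dec V i j) (dec V i j)).
Proof.
rewrite /edot; apply: cont_sum => k; apply: cont_mul;
  by rewrite /dec; under eq_fun do rewrite mxE; apply: cont_coord.
Qed.

Lemma Gd_dproj delta : Gd a w (dproj delta) = Gd a w delta.
Proof.
have E : forall i, Sd w (dproj delta) i = Sd w delta i.
  move=> i; apply: eq_bigr => j _; congr (_ *: _); rewrite /dang /dproj.
  by case: (i < j)%N => //; case: (j < i)%N.
by rewrite /A2.Gd; apply: eq_bigr => i _; rewrite E.
Qed.

Lemma dopt_exists t : 0 <= t -> exists delta, dopt a w t delta.
Proof.
move=> t0.
set A := [set V : 'rV[R]_(n * n * d) | forall q, `[- t, t]%classic (V ord0 q)] `&`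
         [set V | forall i j : 'I_n, edot (dec V i j) (dec V i j) <= t ^+ 2].
have cA : compact A.
  apply: compact_closedI.
    by apply: (@rV_compact _ _ (fun _ => `[- t, t]%classic)) => q; apply: segment_compact.
  have -> : [set V : 'rV[R]_(n * n * d) | forall i j : 'I_n, edot (dec V i j) (dec V i j) <= t ^+ 2]
     = \bigcap_(p in [set: 'I_n * 'I_n])
        ((fun V => edot (dec V p.1 p.2) (dec V p.1 p.2)) @^-1` [set x | x <= t ^+ 2]).
    apply/seteqP; split => V /=; first by move=> h [i j] _; exact: h.
    by move=> h i j; exact: (h (i, j) I).
  apply: closed_bigI => p _; apply: preimage_closed; last exact: closed_le.
  by move=> x _; apply: cont_nsq.
have encA : forall delta, feas t delta -> A (enc (dproj delta)).
  move=> delta hf.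
  have hb : forall i j, enorm (dproj delta i j) <= t.
    move=> i j; rewrite /dproj; case: ifP => h; first exact: hf.
    by rewrite enorm0.
  split => /=.
    move=> q; case/mxvec_indexP: q => p k; case/mxvec_indexP: p => i j.
    have -> : enc (dproj delta) ord0 (mxvec_index (mxvec_index i j) k)
        = dec (enc (dproj delta)) i j 0 k by rewrite /dec mxE.
    rewrite dec_enc in_itv /= -ler_norml; apply: le_trans (coord_le _ _) (hb i j).
  move=> i j; rewrite dec_enc -enorm_sq; apply: lerXn2r; rewrite ?nnegrE ?enorm_ge0 //.
have A0 : A !=set0.
  exists 0; split => /=.
    by move=> q; rewrite mxE in_itv /= oppr_le0 t0.
  move=> i j; have -> : dec 0 i j = 0 by apply/rowP => k; rewrite !mxE.
  by rewrite edot0l sqr_ge0.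
have [V VA Vmax] := compact_EVT_max A0 cA (continuous_subspaceT cont_G).
move/set_mem: VA => [_ VA2].
exists (dec V); split.
  move=> i j _; rewrite enormE -(ger0_norm t0) -sqrtr_sqr ler_sqrt ?sqr_ge0 //.
move=> delta hf; rewrite -Gd_dproj -[dproj delta]dec_enc.
by apply: Vmax; apply/mem_set; apply: encA.
Qed.

End Exist.

End A7.
Import A7.

Module A8.
Set Implicit Arguments. Unset Strict Implicit. Unset Printing Implicit Defensive.

Section Main8.
Variables (R : realType) (n d : nat) (a : 'I_n -> 'rV[R]_d) (w : 'I_n -> R).
Hypothesis hw : forall i, 0 < w i.

Lemma gamma_bound (b : 'rV[R]_d) (g : R) :
  Num.sqrt (enorm b ^+ 2 + g ^+ 2) <= 1 - g -> 2%:R * g <= 1 - edot b b.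
Proof.
rewrite enorm_sq => h.
set s := Num.sqrt _ in h.
have s0 : 0 <= s by apply: sqrtr_ge0.
have ss : s ^+ 2 = edot b b + g ^+ 2 by rewrite sqr_sqrtr // addr_ge0 ?nsq_ge0 ?sqr_ge0.
have : s * s <= (1 - g) * (1 - g) by nra.
rewrite -expr2 ss; nra.
Qed.

Lemma gamma_feas (b : 'rV[R]_d) :
  Num.sqrt (enorm b ^+ 2 + ((1 - edot b b) / 2%:R) ^+ 2) <= 1 - (1 - edot b b) / 2%:R.
Proof.
rewrite enorm_sq.
have -> : edot b b + ((1 - edot b b) / 2%:R) ^+ 2 = ((1 + edot b b) / 2%:R) ^+ 2.
  by field.
rewrite sqrtr_sqr ger0_norm; last by rewrite divr_ge0 ?ler0n // addr_ge0 ?nsq_ge0.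
have -> : 1 - (1 - edot b b) / 2%:R = (1 + edot b b) / 2%:R :> R by field.
by [].
Qed.

Lemma optD_dopt t delta beta gamma : optD a w t delta beta gamma ->
  dopt a w t delta /\ forall i, beta i = - Sd w delta i.
Proof.
move=> [[hb [hn hg]] hopt].
have eb : forall i, beta i = - Sd w delta i.
  by move=> i; apply/eqP; rewrite -addr_eq0 addrC; apply/eqP; exact: hb.
split => //; split => // delta' hf.
set b' := fun i => - Sd w delta' i.
set g' := fun i => (1 - edot (b' i) (b' i)) / 2%:R.
have hf' : feasD w t delta' b' g'.
  split; first by move=> i; rewrite /b' addrN.
  split => // i; exact: gamma_feas.
have := hopt _ _ _ hf'.
have -> : objD a w b' g' = Gd a w delta' + 2^-1 * \sum_(i < n) w i.
  rewrite /objD /A2.Gd mulr_sumr -!big_split; apply: eq_bigr => i _ /=.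
  rewrite /g' /b' edotNr edotNl edotNr opprK.
  have h2 : (2%:R : R) != 0 by rewrite pnatr_eq0.
  by field.
have : objD a w beta gamma <= Gd a w delta + 2^-1 * \sum_(i < n) w i.
  rewrite /objD /A2.Gd mulr_sumr -!big_split; apply: ler_sum => i _ /=.
  have := gamma_bound (hg i); rewrite eb edotNr edotNl edotNr opprK => hgi.
  have := hw i; nra.
lra.
Qed.

Lemma fin_max (I : finType) (P : I -> Prop) (Q : I -> R -> Prop) (lam : R) :
  0 < lam -> (forall i, P i -> exists v, v < lam /\ Q i v) ->
  exists T, 0 <= T /\ T < lam /\ forall i, P i -> exists v, v <= T /\ Q i v.
Proof.
move=> l0 H.
suff : forall s : seq I, exists T, 0 <= T /\ T < lam /\
         forall i, i \in s -> P i -> exists v, v <= T /\ Q i v.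
  move=> /(_ (enum I)) [T [T0 [Tl HT]]]; exists T; split => //; split => // i.
  by apply: HT; rewrite mem_enum.
elim => [|i s [T [T0 [Tl HT]]]]; first by exists 0; split => //; split.
have [Pi|nPi] := classic (P i).
  have [v [vl Qv]] := H i Pi.
  exists (Num.max T v); split; first by rewrite le_max T0.
  split; first by rewrite gt_max Tl vl.
  move=> j; rewrite inE => /orP[/eqP -> _|js Pj].
    by exists v; split => //; rewrite le_max lexx orbT.
  have [u [uT Qu]] := HT j js Pj; exists u; split => //.
  by apply: le_trans uT _; rewrite le_max lexx.
exists T; split => //; split => // j; rewrite inE => /orP[/eqP -> //|js Pj].
exact: HT.
Qed.

Lemma dang_feas t (delta : dvar R n d) : 0 <= t -> feas t delta ->
  forall i j, enorm (dang delta i j) <= t.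
Proof.
move=> t0 hf i j; rewrite /dang; case: ifP => h; first exact: hf.
case: ifP => h'; last by rewrite enorm0.
by rewrite enormN; exact: hf.
Qed.

Lemma enorm_rev (u v : 'rV[R]_d) : enorm u - enorm v <= enorm (u - v).
Proof. have := enormD (u - v) v; rewrite subrK; lra. Qed.

End Main8.

End A8.
Import A8.

Module A9.
Set Implicit Arguments. Unset Strict Implicit. Unset Printing Implicit Defensive.

Section Main9.
Variables (R : realType) (n d : nat) (a : 'I_n -> 'rV[R]_d) (w : 'I_n -> R).
Hypothesis hw : forall i, 0 < w i.

Lemma dproj_le t (delta : dvar R n d) : 0 <= t -> feas t delta ->
  forall i j, enorm (dproj delta i j) <= t.
Proof.
move=> t0 hf i j; rewrite /dproj; case: ifP => h; first exact: hf.
by rewrite enorm0.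
Qed.

Lemma strict_cluster lam (hlam : 0 < lam) (hnf : ~ fusion_value a w lam)
  x (hx : is_minimizerP a w lam x) delta0 beta0 gamma0
  (hopt : optD a w lam delta0 beta0 gamma0) eps (eps0 : 0 < eps)
  (heps : forall y, aff_hull (opt_delta_set a w lam) y ->
     (forall i j, enorm (y i j - dproj delta0 i j) < eps) -> opt_delta_set a w lam y) :
  forall l l' : 'I_n, (l < l')%N -> x l = x l' -> enorm (delta0 l l') < lam.
Proof.
move=> l l' ll' xll.
have [ho eb] := optD_dopt hw hopt.
have xz : x = zd a w delta0 := dopt_unique hw ho hx.
have hb0 : enorm (delta0 l l') <= lam := proj1 ho l l' ll'.
rewrite lt_neqAle hb0 andbT; apply/negP => /eqP hl.
pose C := fun k => x k == x l.
have hpair : forall p : 'I_n * 'I_n, (C p.1 /\ C p.2 /\ p.1 != p.2) ->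
    exists v, v < lam /\ (0 < v /\ exists x', is_minimizerP a w v x' /\ x' p.1 = x' p.2).
  move=> [i j] /= [Ci [Cj ij]].
  apply: NNPP => hne; apply: hnf; split => //; exists i, j; split => //; split.
    move=> x2 hx2; rewrite (dopt_unique hw ho hx2) -xz.
    by move/eqP: Ci => ->; move/eqP: Cj => ->.
  move=> lam' l0 ll x' hx' e; apply: hne; exists lam'; split => //; split => //.
  by exists x'.
have [T [T0 [Tl HT]]] := @fin_max R _ _ _ _ hlam hpair.
have [ds hs] := dopt_exists a w T0.
pose zs := zd a w ds.
have zsmin : is_minimizerP a w T zs := dopt_minimizer hw hs.
have C1 : forall i, C i -> zs i = zs l.
  move=> i Ci; have [->|il] := eqVneq i l; first by [].
  have Cl : C l by rewrite /C eqxx.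
  have [v [vT [v0 [x' [hx' e]]]]] := HT (i, l) (conj Ci (conj Cl il)).
  have [dv hv] := dopt_exists a w (ltW v0).
  have x'z := dopt_unique hw hv hx'.
  have [cv hcv] := W_form hw l hv.
  apply: (@fact2 R n d a w hw v T (fun k => zd a w dv k == zd a w dv l) l (dang dv) cv zs
    _ vT _ _ _ zsmin i).
  - by rewrite /= eqxx.
  - by move=> p q; rewrite dang_anti.
  - by move=> p q _ _; apply: dang_feas (ltW v0) (proj1 hv) p q.
  - by move=> k /eqP Pk; apply: hcv.
  - by rewrite /= -x'z e.
have C2 : forall i, zs i = zs l -> C i.
  move=> i e; have [cs hcs] := W_form hw l hs.
  apply/eqP; apply: (@fact2 R n d a w hw T lam (fun k => zs k == zs l) l (dang ds) cs x
    _ (ltW Tl) _ _ _ hx i).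
  - by rewrite /= eqxx.
  - by move=> p q; rewrite dang_anti.
  - by move=> p q _ _; apply: dang_feas T0 (proj1 hs) p q.
  - by move=> k /eqP Pk; apply: hcs.
  - by rewrite /= e.
have PC : forall k, (zs k == zs l) = C k.
  move=> k; apply/idP/idP => [/eqP/C2 //|Ck]; by rewrite C1.
have [c0 hc0] := W_form hw l ho.
have hc0' : forall i, C i -> a i + \sum_(j < n | C j) w j *: dang delta0 i j = c0.
  move=> i Ci; rewrite (eq_bigl (fun j => zd a w delta0 j == zd a w delta0 l)); last first.
    by move=> j; rewrite /C xz.
  by apply: hc0; rewrite -xz; apply/eqP.
have [cs hcs] := W_form hw l hs.
have hcs' : forall i, C i -> a i + \sum_(j < n | C j) w j *: dang ds i j = cs.
  move=> i Ci; rewrite (eq_bigl (fun j => zs j == zs l)); last by move=> j; rewrite PC.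
  by apply: hcs; apply/eqP; rewrite PC.
have m0 := mean_lemma (@dang_anti R n d delta0) hc0'.
have ms := mean_lemma (@dang_anti R n d ds) hcs'.
have RC0 : 0 < \sum_(i < n | C i) w i.
  rewrite (bigD1 l) /= ?/C ?eqxx //; have := hw l.
  have : 0 <= \sum_(i < n | (x i == x l) && (i != l)) w i by apply: sumr_ge0 => i _; apply: ltW.
  lra.
have ecs : c0 = cs.
  have := congr1 (fun v => (\sum_(i < n | C i) w i)^-1 *: v) (etrans m0 (esym ms)).
  by rewrite /= !scalerA mulVf ?gt_eqF // !scale1r.
have Ssame : forall i, C i ->
    \sum_(j < n | C j) w j *: dang ds i j = \sum_(j < n | C j) w j *: dang delta0 i j.
  by move=> i Ci; apply: (@addrI _ (a i)); rewrite hcs' // hc0' // ecs.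
pose dn : dvar R n d := fun i j => if C i && C j then dang ds i j else delta0 i j.
have hdn : forall i j, dang dn i j = if C i && C j then dang ds i j else dang delta0 i j.
  move=> i j; rewrite /dn /dang; case: (ltngtP i j) => h.
  - by case: (C i && C j).
  - by rewrite andbC; case: (C i && C j).
  - by case: (C i && C j).
have Sn : forall i, Sd w dn i = Sd w delta0 i.
  move=> i; rewrite /A2.Sd (bigID C) [RHS](bigID C) /=.
  case Ci: (C i).
    congr (_ + _).
      rewrite -Ssame //; apply: eq_bigr => j Cj; by rewrite hdn Ci Cj.
    by apply: eq_bigr => j /negbTE Cj; rewrite hdn Ci Cj.
  by congr (_ + _); apply: eq_bigr => j _; rewrite hdn Ci.
have [[hb [hn hg]] hopt2] := hopt.
have nopt : opt_delta_set a w lam (dproj dn).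
  exists dn, beta0, gamma0; split => //; split; [split; [|split]|exact: hopt2].
  - by move=> i; have := hb i; rewrite -/(Sd w delta0 i) -Sn.
  - move=> i j ij; rewrite /dn; case: ifP => _; last exact: hn.
    by apply: le_trans (dang_feas T0 (proj1 hs) i j) (ltW Tl).
  - exact: hg.
have o0 : opt_delta_set a w lam (dproj delta0) by exists delta0, beta0, gamma0.
have l4 : 0 < 4%:R * lam by rewrite mulr_gt0 ?ltr0n.
pose s := eps / (4%:R * lam).
have s0 : 0 < s by rewrite divr_gt0.
pose Y : dvar R n d := fun i j => (1 + s) *: dproj delta0 i j - s *: dproj dn i j.
have Yaff : aff_hull (opt_delta_set a w lam) Y.
  exists 2, (fun k : 'I_2 => if k == ord0 then 1 + s else - s),
    (fun k : 'I_2 => if k == ord0 then dproj delta0 else dproj dn).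
  split; first by move=> k; case: ifP.
  split; first by rewrite !big_ord_recl big_ord0 /=; lra.
  by move=> i j; rewrite !big_ord_recl big_ord0 /= addr0 scaleNr.
have fdn : feas lam dn.
  move=> i j ij; rewrite /dn; case: ifP => _; last exact: hn.
  by apply: le_trans (dang_feas T0 (proj1 hs) i j) (ltW Tl).
have Ydist : forall i j, enorm (Y i j - dproj delta0 i j) < eps.
  move=> i j.
  have -> : Y i j - dproj delta0 i j = s *: (dproj delta0 i j - dproj dn i j).
    by apply/rowP => k; rewrite !mxE; ring.
  rewrite enormZ ger0_norm ?ltW //.
  have h1 := dproj_le (ltW hlam) (proj1 ho) i j.
  have h2 := dproj_le (ltW hlam) fdn i j.
  have h3 := enormD (dproj delta0 i j) (- dproj dn i j); rewrite enormN in h3.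
  have h4 : enorm (dproj delta0 i j - dproj dn i j) <= 2%:R * lam by lra.
  apply: le_lt_trans (ler_wpM2l (ltW s0) h4) _.
  have hl0 : lam != 0 by rewrite gt_eqF.
  have -> : eps / (4%:R * lam) * (2%:R * lam) = eps / 2%:R by field.
  lra.
have [dy [byy [gy [hoy eY]]]] := heps Y Yaff Ydist.
have fy := proj1 (proj2 (proj1 hoy)) l l' ll'.
have Yll : Y l l' = dy l l' by rewrite eY /dproj ll'.
have Cl : C l by rewrite /C eqxx.
have Cl' : C l' by rewrite /C xll eqxx.
have Yll2 : Y l l' = (1 + s) *: delta0 l l' - s *: dang ds l l'.
  by rewrite /Y /dproj ll' /dn Cl Cl'.
have hrev := enorm_rev ((1 + s) *: delta0 l l') (s *: dang ds l l').
rewrite -Yll2 Yll (enormZ (1 + s)) (enormZ s) hl (ger0_norm (ltW s0)) in hrev.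
rewrite ger0_norm in hrev; last by have := s0; lra.
have hT := dang_feas T0 (proj1 hs) l l'.
have h5 : s * enorm (dang ds l l') <= s * T by rewrite ler_wpM2l // ltW.
have h6 : 0 < s * (lam - T) by rewrite mulr_gt0 // subr_gt0.
have h7 : (1 + s) * lam = lam + s * lam by ring.
have h8 : s * (lam - T) = s * lam - s * T by ring.
lra.
Qed.

End Main9.

End A9.
Import A9.

Unset Implicit Arguments.

Theorem lemma7p2 (R : realType) (n d : nat) (hn : (2 <= n)%N) (hd : (1 <= d)%N)
  (a : 'I_n -> 'rV[R]_d) (w : 'I_n -> R) (hw : forall i, 0 < w i)
  (lam : R) (hlam : 0 < lam) (hnf : ~ fusion_value a w lam)
  (x : 'I_n -> 'rV[R]_d) (hx : is_minimizerP a w lam x)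
  (deltaa : dvar R n d) (hda : rel_interior (opt_delta_set a w lam) deltaa) :
  let r := \big[Num.min/lam]_(l < n)
             \big[Num.min/lam]_(l' < n | (l < l')%N && (x l == x l'))
               (lam - enorm (deltaa l l')) in
  0 < r /\
  forall p' mu : R, 0 <= p' -> 0 <= mu ->
  forall delta : dvar R n d,
    (forall i j : 'I_n, (i < j)%N -> enorm (delta i j - deltaa i j) <= p' * mu) ->
    forall i j : 'I_n, (i < j)%N -> x i = x j ->
      enorm (delta i j) <= lam - r + p' * mu.
Proof.
move=> r.
have [[delta0 [beta0 [gamma0 [hopt hd0]]]] [eps [eps0 heps]]] := hda.
subst deltaa.
have strict := strict_cluster hw hlam hnf hx hopt eps0 heps.
split.
  apply/bigmin_gtP; split => // l _; apply/bigmin_gtP; split => // l' /andP[ll' /eqP e].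
  by rewrite subr_gt0 /dproj ll'; apply: strict.
move=> p' mu _ _ delta hdel i j ij xij.
have r1 : r <= lam - enorm (dproj delta0 i j).
  apply: (bigmin_inf i) => //.
  by apply: bigmin_le_cond; rewrite ij xij eqxx.
have h2 := hdel i j ij.
have h1 := enormD (delta i j - dproj delta0 i j) (dproj delta0 i j); rewrite subrK in h1.
lra.
Qed.
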